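(* Let $\mathbf X$ be a compact metric space and $Y>0$. Consider the on-line regression protocol in which, at each round $n=1,2,\dots$, Reality announces a signal $x_n\in\mathbf X$, then Predictor announces a prediction $\mu_n\in\mathbb R$, then Reality announces an observation $y_n\in[-Y,Y]$. There exists a strategy for Predictor which guarantees that, for every continuous function $F:\mathbf X\to\mathbb R$ and every sequence of moves of Reality, $$\limsup_{N\to\infty}\left(\frac1N\sum_{n=1}^N (y_n-\mu_n)^2-\frac1N\sum_{n=1}^N (y_n-F(x_n))^2\right)\le 0 .$$
   Context: A strategy for Predictor is a function mapping each finite history $(x_1,y_1,\dots,x_{n-1},y_{n-1},x_n)$ to the prediction $\mu_n$; Reality may choose its moves adaptively, and the guarantee must hold for all such choices. *)

(* Defs.v *)
From HB Require Import structures.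
From mathcomp Require Import all_boot all_order all_algebra.
From mathcomp Require Import all_classical all_reals all_analysis.
Set Implicit Arguments. Unset Strict Implicit. Unset Printing Implicit Defensive.
Import Order.TTheory GRing.Theory Num.Theory.
Local Open Scope ring_scope.

(* A strategy for Predictor: maps the past history
   [:: (x_1,y_1); ...; (x_{n-1},y_{n-1})] and the current signal x_n
   to the prediction mu_n. *)
Definition strategy (R : realType) (X : Type) := seq (X * R) -> X -> R.

Definition history (R : realType) (X : Type) (x : nat -> X) (y : nat -> R) (n : nat)
  : seq (X * R) := [seq (x i, y i) | i <- iota 0 n].

Definition prediction (R : realType) (X : Type) (S : strategy R X)
  (x : nat -> X) (y : nat -> R) (n : nat) : R := S (history x y n) (x n).

Definition avg_diff (R : realType) (X : Type) (S : strategy R X) (F : X -> R)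
  (x : nat -> X) (y : nat -> R) (N : nat) : R :=
  N%:R^-1 * (\sum_(n < N) (y n - prediction S x y n) ^+ 2)
  - N%:R^-1 * (\sum_(n < N) (y n - F (x n)) ^+ 2).

(* Main.v *)
Require Import Defs.
From HB Require Import structures.
From mathcomp Require Import all_boot all_order all_algebra.
From mathcomp Require Import all_classical all_reals all_analysis.
From mathcomp Require Import zify ring lra.
Import Order.TTheory GRing.Theory Num.Theory numFieldNormedType.Exports.
Local Open Scope ring_scope.
Local Open Scope classical_set_scope.
Section MeanMin.
Variable R : realType.

Lemma mean_min (r : seq nat) (P : pred nat) (f : nat -> R) (a : R) :
  \sum_(i <- r | P i) (1:R) != 0 ->
  \sum_(i <- r | P i) (f i - (\sum_(i <- r | P i) f i) / \sum_(i <- r | P i) (1:R))^+2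
  <= \sum_(i <- r | P i) (f i - a)^+2.
Proof.
set n := \sum_(i <- r | P i) (1:R).
set Sf := \sum_(i <- r | P i) f i.
move=> n0; set m := Sf / n.
rewrite -subr_ge0 -sumrB.
have -> : \sum_(i <- r | P i) ((f i - a) ^+ 2 - (f i - m) ^+ 2)
   = \sum_(i <- r | P i) ((2 * (m - a)) * f i + ((a - m) * (m + a)) * 1).
  by apply: eq_bigr => i _; ring.
rewrite big_split /= -!mulr_sumr -/n -/Sf.
have -> : Sf = m * n by rewrite /m divfK.
have -> : 2 * (m - a) * (m * n) + (a - m) * (m + a) * n = n * (m - a)^+2 by ring.
apply: mulr_ge0; last exact: sqr_ge0.
by apply: sumr_ge0.
Qed.
End MeanMin.
Section FTL.
Variables (R : realType) (y : nat -> R) (key : nat -> nat).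

Definition cnt n : R := \sum_(0 <= s < n | key s == key n) 1.
Definition ssum n : R := \sum_(0 <= s < n | key s == key n) y s.
Definition mu n := ssum n / cnt n.
Definition nu n := (ssum n + y n) / (cnt n + 1).

Lemma cnt_ge0 n : 0 <= cnt n.
Proof. by apply: sumr_ge0. Qed.

Lemma sum_upto_key (f : nat -> R) n :
  \sum_(0 <= s < n.+1 | key s == key n) f s =
  \sum_(0 <= s < n | key s == key n) f s + f n.
Proof. by rewrite big_mkcond big_nat_recr//= -big_mkcond /= ?eqxx. Qed.

Lemma btl N (c : nat -> R) :
  \sum_(0 <= n < N) (y n - nu n)^+2 <= \sum_(0 <= n < N) (y n - c (key n))^+2.
Proof.
elim: N c => [|N IH] c; first by rewrite !big_geq.
set k := key N; set m := nu N.
pose c' := fun k' => if k' == k then m else c k'.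
rewrite big_nat_recr//= [X in _ <= X]big_nat_recr//=.
apply: le_trans (lerD (IH c') (lexx _)) _.
rewrite (bigID (fun n => key n == k)) /= [X in _ <= X + _](bigID (fun n => key n == k)) /=.
have -> : \sum_(0 <= i < N | key i == k) (y i - c' (key i)) ^+ 2 =
          \sum_(0 <= i < N | key i == k) (y i - m) ^+ 2.
  by apply: eq_bigr => i /eqP ->; rewrite /c' eqxx.
have -> : \sum_(0 <= i < N | key i != k) (y i - c' (key i)) ^+ 2 =
          \sum_(0 <= i < N | key i != k) (y i - c (key i)) ^+ 2.
  by apply: eq_bigr => i /negbTE ki; rewrite /c' ki.
have -> : \sum_(0 <= i < N | key i == k) (y i - c (key i)) ^+ 2 =
          \sum_(0 <= i < N | key i == k) (y i - c k) ^+ 2.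
  by apply: eq_bigr => i /eqP ->.
have mE : m = (\sum_(0 <= s < N.+1 | key s == k) y s) /
              \sum_(0 <= s < N.+1 | key s == k) (1:R).
  by rewrite /m /nu !sum_upto_key.
have H := @mean_min R (index_iota 0 N.+1) (fun s => key s == k) y (c k).
rewrite -mE /k !sum_upto_key -/k in H.
have nz : \sum_(0 <= i < N | key i == k) (1:R) + 1 != 0.
  apply: lt0r_neq0; have : 0 <= \sum_(0 <= i < N | key i == k) (1:R) by apply: sumr_ge0.
  lra.
move: (H nz) => {}H.
rewrite -/m -/k.
lra.
Qed.

Hypothesis Y : R.
Hypothesis yb : forall n, `|y n| <= Y.

Lemma ssum_bound n : `|ssum n| <= cnt n * Y.
Proof.
rewrite /ssum /cnt mulr_suml.
apply: le_trans (ler_norm_sum _ _ _) _.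
by apply: ler_sum => i _; rewrite mul1r.
Qed.

Lemma step_bound n :
  (y n - mu n)^+2 - (y n - nu n)^+2 <= 8 * Y^+2 / (cnt n + 1).
Proof.
have hY : 0 <= Y by apply: le_trans (yb n); exact: normr_ge0.
have hy := yb n.
move: (cnt_ge0 n) (ssum_bound n); rewrite /mu /nu.
move: (cnt n) (ssum n) => c S c0 hsb.
have Sa : S = c * (S / c).
  have [c00|c0'] := eqVneq c 0.
    by move: hsb; rewrite c00 mul0r normr_le0 => /eqP ->; rewrite mul0r.
  by rewrite mulrC divfK.
have ha : `|S / c| <= Y.
  have [->|c0'] := eqVneq c 0; first by rewrite invr0 mulr0 normr0.
  by rewrite normrM normfV (ger0_norm c0) ler_pdivrMr ?lt0r ?c0'// mulrC.
move: Sa ha; move: (S / c) => a Sa ha.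
rewrite Sa.
have cp : 0 < c + 1 by lra.
have d0 : 0 < (c + 1)^-1 by rewrite invr_gt0.
have cd : (c + 1) * (c + 1)^-1 = 1 by rewrite mulfV// lt0r_neq0.
move: d0 cd; move: (c + 1)^-1 => d d0 cd.
have d1 : d <= 1 by nra.
have nuE : y n - (c * a + y n) * d = (y n - a) * (1 - d).
  have -> : 1 - d = c * d by rewrite -cd; ring.
  rewrite -[y n]mul1r -{1}cd; ring.
rewrite nuE.
have hya : (y n - a)^+2 <= 4 * Y^+2.
  have : `|y n - a| <= 2 * Y.
    by apply: le_trans (ler_normB _ _) _; lra.
  move=> h; rewrite -(real_normK (num_real (y n - a))).
  have h0 : 0 <= `|y n - a| by [].
  nra.
rewrite exprMn.
move: (sqr_ge0 (y n - a)) hya; move: ((y n - a)^+2) => u u0 hu.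
have -> : u - u * (1 - d) ^+ 2 = u * d * (2 - d) by ring.
have h1 : 0 <= (4 * Y^+2 - u) * d by apply: mulr_ge0; lra.
have h2 : 0 <= u * d * d by apply: mulr_ge0; [apply: mulr_ge0|]; lra.
nra.
Qed.

End FTL.
Lemma big_cond_recr (T : Type) (idx : T) (op : Monoid.com_law idx) N
  (P : pred nat) (F : nat -> T) :
  \big[op/idx]_(0 <= n < N.+1 | P n) F n =
  op (\big[op/idx]_(0 <= n < N | P n) F n) (if P N then F N else idx).
Proof. by rewrite big_mkcond big_nat_recr// -big_mkcond. Qed.

Section Count.
Variable key : nat -> nat.
Local Open Scope nat_scope.

Definition cntN n : nat := \sum_(0 <= s < n | key s == key n) 1%N.

Lemma cnt_nat (R : realType) n : @cnt R key n = ((cntN n)%:R)%R.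
Proof. by rewrite /cnt /cntN natr_sum. Qed.

Lemma cell_min k K N :
  \sum_(0 <= n < N | key n == k) (cntN n < K : nat) =
  minn K (\sum_(0 <= n < N | key n == k) 1%N).
Proof.
elim: N => [|N IH]; first by rewrite !big_geq// minn0.
rewrite !big_cond_recr IH.
case: eqP => [kN|_] /=; last by rewrite ?addn0; lia.
rewrite /cntN kN.
move: (\sum_(0 <= n < N | key n == k) 1%N) => c.
case: (ltnP c K) => cK /=; lia.
Qed.

Lemma sum_ind j B b : (j < B)%N ->
  \sum_(0 <= k < B) (if j == k then b else 0%N) = b.
Proof.
elim: B => // B IH jB; rewrite big_nat_recr//=.
case: (ltnP j B) => h.
  by rewrite IH// (ltn_eqF h) addn0.
have jE : j = B by lia.
rewrite jE eqxx big_nat_cond big1 // => k /andP[/andP[_ kB] _].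
by rewrite (gtn_eqF kB).
Qed.

Lemma count_small K B N : (forall n, (n < N)%N -> (key n < B)%N) ->
  (\sum_(0 <= n < N) (cntN n < K : nat) <= K * B)%N.
Proof.
move=> kB.
have -> : \sum_(0 <= n < N) (cntN n < K : nat) =
   \sum_(0 <= k < B) \sum_(0 <= n < N | key n == k) (cntN n < K : nat).
  under [RHS]eq_bigr do rewrite big_mkcond.
  rewrite exchange_big /=.
  apply: eq_big_nat => n /andP[_ nN].
  by rewrite sum_ind// kB.
apply: (@leq_trans (\sum_(0 <= k < B) K)).
  by apply: leq_sum => k _; rewrite cell_min geq_minl.
by rewrite sum_nat_const_nat subn0 mulnC.
Qed.
End Count.
Lemma inv_bound (R : realType) (key : nat -> nat) (K B N : nat) : (0 < K)%N ->
  (forall n, (n < N)%N -> (key n < B)%N) ->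
  \sum_(0 <= n < N) (@cnt R key n + 1)^-1 <= (K * B)%:R + N%:R / K%:R.
Proof.
move=> K0 kB.
have Kp : (0 : R) < K%:R by rewrite ltr0n.
apply: (@le_trans _ _ (\sum_(0 <= n < N) (((cntN key n < K)%N : nat)%:R + K%:R^-1))).
  apply: ler_sum => n _; rewrite cnt_nat.
  case: ltnP => h /=.
    have : (0:R) <= K%:R^-1 by rewrite invr_ge0 ltW.
    have : ((cntN key n)%:R + 1 : R)^-1 <= 1.
      by rewrite invf_le1 ?lerDr// ltr_wpDl.
    lra.
  rewrite add0r lef_pV2 ?posrE ?ltr_wpDl//.
  have : (K%:R:R) <= (cntN key n)%:R by rewrite ler_nat.
  lra.
rewrite big_split /= -natr_sum sumr_const_nat subn0.
apply: lerD; first by rewrite ler_nat count_small.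
by rewrite mulr_natl.
Qed.
Section Lev.
Local Open Scope nat_scope.
Variable Bf : nat -> nat.
Hypothesis Bmono : forall J, Bf J <= Bf J.+1.

Definition gl J := J.+1 ^ 2 * Bf J + J.

Fixpoint lev n := match n with
  | 0 => 0
  | n'.+1 => if gl (lev n').+1 <= n'.+1 then (lev n').+1 else lev n'
  end.

Lemma lev_S n : lev n <= lev n.+1.
Proof. by rewrite /=; case: ifP. Qed.

Lemma lev_mono m n : m <= n -> lev m <= lev n.
Proof.
move=> /subnK <-; elim: (n - m) => [|k IH]; first by rewrite add0n.
by apply: leq_trans IH (lev_S _).
Qed.

Lemma lev_inv n : lev n = 0 \/ gl (lev n) <= n.
Proof.
elim: n => [|n IH]; first by left.
rewrite /=; case: ifP => h; first by right.
case: IH => [->|IH]; [by left | right; lia].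
Qed.

Lemma gl_lt J : gl J < gl J.+1.
Proof. rewrite /gl; have := Bmono J; nia. Qed.

Lemma lev_unb n J : gl J <= n -> J <= lev n.
Proof.
elim: n J => [|n IH] J.
  by rewrite /gl; lia.
move=> h.
case: (leqP (gl J) n) => h2; first by apply: leq_trans (IH _ h2) (lev_S _).
case: J h h2 => [|J] h h2; first by [].
have h3 : gl J <= n by have := gl_lt J; lia.
have := IH _ h3 => h4.
case: (leqP J.+1 (lev n)) => h5; first by apply: leq_trans h5 (lev_S _).
have e : lev n = J by lia.
by rewrite /= e h.
Qed.
End Lev.
Section Geo.
Variables (R : realType) (X : metricType R).
Hypothesis hX : compact [set: X].

Definition supF : set_system (seq X) :=
  fun A => exists s0 : seq X, forall s, {subset s0 <= s} -> A s.

Lemma supF_filter : Filter supF.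
Proof.
constructor.
- by exists [::].
- move=> A B [s0 hA] [s1 hB]; exists (s0 ++ s1) => s hs; split.
    by apply: hA => z zs; apply: hs; rewrite mem_cat zs.
  by apply: hB => z zs; apply: hs; rewrite mem_cat zs orbT.
- by move=> A B AB [s0 hA]; exists s0 => s hs; apply: AB; apply: hA.
Qed.

Lemma nets (e : R) : 0 < e -> exists s : seq X, forall x, exists2 p, p \in s & ball p e x.
Proof.
move=> e0.
have := (compact_near_coveringP [set: X]).1 hX (seq X) supF
  (fun s x => exists2 p, p \in s & ball p e x) supF_filter.
case.
  move=> x _.
  exists (ball x e, [set s : seq X | x \in s]).
  split => /=.
  - exact: nbhsx_ballx.
  - by exists [:: x] => s; apply; rewrite mem_seq1.
  - by move=> [x' s] /= [bx xs]; exists x.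
move=> s0 hs0; exists s0 => x.
by apply: (hs0 s0 (fun z zs => zs) x).
Qed.
End Geo.
Section Geo2.
Variables (R : realType) (X : metricType R).
Hypothesis hX : compact [set: X].
Variable F : X -> R.
Hypothesis cF : continuous F.

Lemma cont_ball (x : X) (e : R) : 0 < e ->
  exists2 r, 0 < r & forall x', ball x r x' -> `|F x - F x'| < e.
Proof.
move=> e0.
have [r r0 hr] := (nbhs_ballP x _).1 (cvg_ball (cF x) e0).
exists r => // x' /hr.
Qed.

Lemma ucont (eps : R) : 0 < eps ->
  exists2 d, 0 < d & forall p q, ball p d q -> `|F p - F q| < eps.
Proof.
move=> e0.
have e2 : 0 < eps / 2 by rewrite divr_gt0.
have H := (compact_near_coveringP [set: X]).1 hX R (0:R)^'+
  (fun d x => forall q, ball x d q -> `|F x - F q| < eps) _.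
have {H} H : \forall d \near (0:R)^'+, [set: X] `<=`
   (fun x => forall q, ball x d q -> `|F x - F q| < eps).
  apply: H => x _.
  have [r r0 hr] := cont_ball x (eps / 2) e2.
  have r2 : 0 < r / 2 by rewrite divr_gt0.
  exists (ball x (r / 2), [set d : R | 0 < d /\ d < r / 2]).
  split => /=.
  - exact: nbhsx_ballx.
  - near=> d; split; near: d; [exact: nbhs_right_gt | exact: nbhs_right_lt].
  - move=> [x' d] /= [bx [d0 dr]] q bq.
    have rr : r / 2 <= r by lra.
    have rd : r / 2 + d <= r by lra.
    have h1 := hr x' (le_ball rr bx).
    have h2 := hr q (le_ball rd (ball_triangle bx bq)).
    have h4 := ler_distD (F x) (F x') (F q).
    rewrite distrC in h1.
    lra.
near (0:R)^'+ => d.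
exists d; first by near: d; exact: nbhs_right_gt.
by move=> p q; apply: (near H d).
Unshelve. all: by end_near.
Qed.
Lemma fbound : exists M, forall p, `|F p| <= M.
Proof.
have H := (compact_near_coveringP [set: X]).1 hX R (pinfty_nbhs R)
  (fun M x => `|F x| <= M) _.
have {H} H : \forall M \near +oo, [set: X] `<=` (fun x => `|F x| <= M).
  apply: H => x _.
  have [r r0 hr] := cont_ball x 1 ltr01.
  exists (ball x r, [set M : R | `|F x| + 1 <= M]).
  split => /=.
  - exact: nbhsx_ballx.
  - by apply: nbhs_pinfty_ge; rewrite num_real.
  - move=> [x' M] /= [bx hM].
    have h1 := hr x' bx.
    have e : F x' = F x + (F x' - F x) by ring.
    rewrite e; apply: le_trans (ler_normD _ _) _.
    rewrite distrC in h1; lra.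
near (pinfty_nbhs R) => M.
exists M => p; apply: (near H M) => //.
Unshelve. all: by end_near.
Qed.
End Geo2.
Lemma limsup_le0 (R : realType) (u : nat -> R) :
  (forall e, 0 < e -> exists N1, forall N, (N1 <= N)%N -> u N <= e) ->
  (limn_esup (fun N => (u N)%:E) <= 0)%E.
Proof.
move=> H; apply/lee_addgt0Pr => e e0; rewrite add0e.
have [N1 hN1] := H e e0.
rewrite /limn_esup /limf_esup.
apply: (@le_trans _ _ (ereal_sup ((fun N => (u N)%:E) @` [set N | (N1 <= N)%N]))).
  apply: ereal_inf_lbound; exists [set N | (N1 <= N)%N] => //.
  by exists N1.
apply: ge_ereal_sup => _ [N hN <-].
by rewrite lee_fin hN1.
Qed.
Definition strat (R : realType) (X : Type) (kf : nat -> X -> nat) : strategy R X :=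
  fun h x1 =>
   (\sum_(0 <= s < size h | kf s (nth (x1, 0) h s).1 == kf (size h) x1) (nth (x1, 0) h s).2) /
   (\sum_(0 <= s < size h | kf s (nth (x1, 0) h s).1 == kf (size h) x1) 1).

Lemma nth_hist (R : realType) (X : Type) (x : nat -> X) (y : nat -> R) n s d :
  (s < n)%N -> nth d (history x y n) s = (x s, y s).
Proof.
by move=> sn; rewrite /history (nth_map 0%N) ?size_iota // nth_iota.
Qed.

Lemma strat_pred (R : realType) (X : Type) (kf : nat -> X -> nat) (x : nat -> X) (y : nat -> R) n :
  prediction (@strat R X kf) x y n = @mu R y (fun s => kf s (x s)) n.
Proof.
rewrite /prediction /strat /mu /ssum /cnt.
have hs : size (history x y n) = n by rewrite /history size_map size_iota.
rewrite hs.
rewrite (big_nat_cond _ _ 0 n) [X in _ / X](big_nat_cond _ _ 0 n).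
rewrite [X in _ = X / _](big_nat_cond _ _ 0 n) [X in _ = _ / X](big_nat_cond _ _ 0 n).
congr (_ / _); apply: eq_big => s //; by case: (ltnP s n) => sn /=; rewrite ?(@nth_hist R X x y n s _ sn).
Qed.
Lemma regret_bound (R : realType) (Y : R) (y : nat -> R)
  (yb : forall n, `|y n| <= Y) (key : nat -> nat) (c f : nat -> R) N :
  \sum_(0 <= n < N) (y n - mu R y key n)^+2 - \sum_(0 <= n < N) (y n - f n)^+2 <=
  8 * Y^+2 * \sum_(0 <= n < N) (cnt R key n + 1)^-1 +
  \sum_(0 <= n < N) ((y n - c (key n))^+2 - (y n - f n)^+2).
Proof.
have h1 := btl R y key N c.
have h2 : \sum_(0 <= n < N) ((y n - mu R y key n)^+2 - (y n - nu R y key n)^+2)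
   <= \sum_(0 <= n < N) (8 * Y^+2 / (cnt R key n + 1)).
  by apply: ler_sum => n _; exact: (step_bound R y key Y yb n).
rewrite !sumrB -mulr_sumr in h2 *.
lra.
Qed.
Lemma sq_diff (R : realType) (Y M yv a b : R) :
  `|yv| <= Y -> `|a| <= M -> `|b| <= M ->
  (yv - a)^+2 - (yv - b)^+2 <= (2 * Y + 2 * M) * `|a - b|.
Proof.
move=> /ler_normlP [h1 h2] /ler_normlP [h3 h4] /ler_normlP [h5 h6].
have -> : (yv - a)^+2 - (yv - b)^+2 = (b - a) * (2 * yv - a - b) by ring.
case: (lerP 0 (a - b)) => hab.
  rewrite ger0_norm //; nra.
rewrite ltr0_norm //; nra.
Qed.

Lemma sum_if (R : realType) (G : R) (n0 N : nat) : 0 <= G ->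
  \sum_(0 <= n < N) (if (n < n0)%N then G else 0) <= n0%:R * G.
Proof.
move=> G0.
suff : \sum_(0 <= n < N) (if (n < n0)%N then G else 0) = (minn N n0)%:R * G.
  by move=> ->; apply: ler_wpM2r => //; rewrite ler_nat geq_minr.
elim: N => [|N IH]; first by rewrite big_geq// min0n mul0r.
rewrite big_nat_recr//= IH.
case: (boolP (N < n0)%N) => h.
  have -> : minn N.+1 n0 = (minn N n0).+1 by lia.
  by rewrite -addn1 natrD mulrDl mul1r.
have -> : minn N.+1 n0 = minn N n0 by lia.
by rewrite addr0.
Qed.

Lemma arch_r (R : realType) (m : R) : 0 < m ->
  exists J0 : nat, (1 <= J0)%N /\ forall l, (J0 <= l)%N -> (l.+1%:R : R)^-1 <= m.
Proof.
move=> m0.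
exists (Num.truncn (m^-1)).+1; split => // l hl.
have h := truncnS_gt (m^-1).
have h2 : m^-1 < l.+1%:R.
  apply: lt_le_trans h _; rewrite ler_nat; exact: (ltn_trans hl (ltnSn l)).
have lp : (0 : R) < l.+1%:R by rewrite ltr0n.
have e1 : m * m^-1 = 1 by rewrite mulfV // gt_eqF.
have e2 : l.+1%:R * (l.+1%:R : R)^-1 = 1 by rewrite mulfV // gt_eqF.
have i0 : (0 : R) < (l.+1%:R)^-1 by rewrite invr_gt0.
have h3 : 1 < m * l.+1%:R by rewrite -[X in X < _]e1 ltr_pM2l.
apply: ltW; rewrite -(ltr_pM2l lp) e2 mulrC //.
Qed.

Lemma sum_ord_nat (R : realType) N (f : nat -> R) :
  \sum_(n < N) f n = \sum_(0 <= n < N) f n.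
Proof. by rewrite big_mkord. Qed.
Theorem theorem1 (R : realType) (X : metricType R) (hX : compact [set: X])
  (Y : R) (hY : 0 < Y) :
  exists S : strategy R X,
    forall (F : X -> R), continuous F ->
    forall (x : nat -> X) (y : nat -> R), (forall n, `|y n| <= Y) ->
      (limn_esup (fun N => (avg_diff S F x y N)%:E) <= 0)%E.
Proof.
case: (pselect (exists x : X, True)) => [[x0 _]|nX]; last first.
  by exists (fun _ _ => 0) => F _ x; exfalso; apply: nX; exists (x 0%N).
pose r (l : nat) : R := (l.+1%:R)^-1.
have r0 : forall l, 0 < r l by move=> l; rewrite invr_gt0 ltr0n.
have [net hnet] : {net : nat -> seq X & forall l x, exists2 p, p \in net l & ball p (r l) x}.
  apply: (@choice _ _ (fun l s => forall x, exists2 p, p \in s & ball p (r l) x)).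
  by move=> l; exact: (nets R X hX (r l) (r0 l)).
have [idx hidx] : {idx : nat * X -> nat & forall lx : nat * X,
    (idx lx < size (net lx.1))%N /\ ball (nth x0 (net lx.1) (idx lx)) (r lx.1) lx.2}.
  apply: (@choice _ _ (fun lx i => (i < size (net lx.1))%N /\ ball (nth x0 (net lx.1) i) (r lx.1) lx.2)).
  move=> -[l x]; have [p pin bp] := hnet l x.
  by exists (index p (net l)); split; [rewrite index_mem | rewrite nth_index].
pose keyf (l : nat) (x : X) : nat := pickle (l, idx (l, x)).
pose mx (l : nat) : nat := (\max_(i < size (net l)) (pickle (l, (i : nat))).+1)%N.
pose Bf (J : nat) : nat := (\max_(l < J.+1) mx l)%N.
have Bmono : forall J, (Bf J <= Bf J.+1)%N.
  by move=> J; rewrite /Bf [X in (_ <= X)%N]big_ord_recr /= leq_maxl.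
have keyB : forall l J x, (l <= J)%N -> (keyf l x < Bf J)%N.
  move=> l J x lJ.
  have [ilt _] := hidx (l, x).
  apply: (@leq_trans (mx l)).
    exact: (leq_bigmax (F := fun i : 'I_(size (net l)) => (pickle (l, (i:nat))).+1) (Ordinal ilt)).
  have lJ' : (l < J.+1)%N by [].
  exact: (leq_bigmax (F := fun i : 'I_J.+1 => mx i) (Ordinal lJ')).
pose lv := lev Bf.
pose kf (s : nat) (x : X) := keyf (lv s) x.
exists (@strat R X kf).
move=> F cF x y yb.
pose key n := kf n (x n).
pose c (k : nat) : R := if unpickle k is Some (l, i) then F (nth x0 (net l) i) else 0.
pose w n := nth x0 (net (lv n)) (idx (lv n, x n)).
have ck : forall n, c (key n) = F (w n).
  by move=> n; rewrite /c /key /kf /keyf pickleK.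
have bw : forall n, ball (w n) (r (lv n)) (x n) := fun n => (hidx (lv n, x n)).2.
have [M hM] := fbound R X hX F cF.
have M0 : 0 <= M by exact: le_trans (normr_ge0 _) (hM x0).
apply: (limsup_le0 R (fun N => avg_diff (@strat R X kf) F x y N)) => e e0.
pose L := 2 * Y + 2 * M + 1.
have L0 : 0 < L by rewrite /L; lra.
have eL : 0 < e / (3 * L) by rewrite divr_gt0 // mulr_gt0.
have [d d0 hd] := ucont R X hX F cF _ eL.
have Y2 : 0 < 48 * Y ^+ 2 by rewrite mulr_gt0 // exprn_gt0.
have em : 0 < e / (48 * Y ^+ 2) by rewrite divr_gt0.
pose m := Num.min d (e / (48 * Y ^+ 2)).
have m0 : 0 < m by rewrite /m lt_min d0 em.
have [J0 [J01 hJ0]] := arch_r R m m0.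
pose n0 := gl Bf J0.
pose G := (2 * Y + 2 * M) * (2 * M).
have G0 : 0 <= G by rewrite /G mulr_ge0 //; lra.
have rmono : forall n, (n0 <= n)%N -> r (lv n) <= m.
  move=> n hn; apply: hJ0; apply: (lev_unb Bf Bmono n J0).
  by rewrite /n0 in hn.
have hD : forall n, (y n - c (key n))^+2 - (y n - F (x n))^+2 <=
    e / 3 + (if (n < n0)%N then G else 0).
  move=> n; rewrite ck.
  have h := sq_diff R Y M (y n) (F (w n)) (F (x n)) (yb n) (hM _) (hM _).
  have hn0 : 0 <= `|F (w n) - F (x n)| by [].
  case: (boolP (n < n0)%N) => hn.
    have : `|F (w n) - F (x n)| <= 2 * M.
      by apply: le_trans (ler_normB _ _) _; have := hM (w n); have := hM (x n); lra.
    move=> h2.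
    have : (2 * Y + 2 * M) * `|F (w n) - F (x n)| <= G.
      by rewrite /G; apply: ler_wpM2l => //; lra.
    have : 0 <= e / 3 by lra.
    lra.
  have hn' : (n0 <= n)%N by rewrite leqNgt.
  have bd : ball (w n) d (x n).
    apply: le_ball (bw n); apply: le_trans (rmono n hn') _.
    by rewrite /m ge_min lexx.
  have h3 := hd _ _ bd.
  have : (2 * Y + 2 * M) * `|F (w n) - F (x n)| <= L * (e / (3 * L)).
    apply: ler_pM => //; first by lra.
      by rewrite /L; lra.
    exact: ltW.
  have -> : L * (e / (3 * L)) = e / 3 by field; rewrite gt_eqF.
  lra.
have hsumD : forall N, \sum_(0 <= n < N) ((y n - c (key n))^+2 - (y n - F (x n))^+2)
    <= N%:R * (e / 3) + n0%:R * G.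
  move=> N; apply: le_trans (ler_sum _ (fun n _ => hD n)) _.
  rewrite big_split /= sumr_const_nat subn0 mulr_natl.
  by apply: lerD => //; apply: sum_if.
have hinv : forall N, (n0 <= N)%N ->
    8 * Y ^+ 2 * \sum_(0 <= n < N) (cnt R key n + 1)^-1 <= N%:R * (e / 3).
  move=> N hN.
  pose J := lv N.
  have J0J : (J0 <= J)%N by apply: (lev_unb Bf Bmono N J0).
  have glJ : (gl Bf J <= N)%N.
    case: (lev_inv Bf N) => // h; rewrite -/lv -/J in h; lia.
  have kB : forall n, (n < N)%N -> (key n < Bf J)%N.
    move=> n nN; apply: keyB; apply: lev_mono; exact: ltnW.
  have h := inv_bound R key J.+1 (Bf J) N (ltn0Sn J) kB.
  have h2 : ((J.+1 * Bf J)%:R : R) <= N%:R / J.+1%:R.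
    rewrite ler_pdivlMr ?ltr0n // -natrM ler_nat.
    move: glJ; rewrite /gl; nia.
  have h3 : (N%:R / J.+1%:R : R) <= N%:R * m.
    apply: ler_wpM2l => //; exact: (hJ0 J J0J).
  have h4 : m <= e / (48 * Y ^+ 2) by rewrite /m ge_min lexx orbT.
  have h5 : \sum_(0 <= n < N) (cnt R key n + 1)^-1 <= 2 * N%:R * (e / (48 * Y ^+ 2)).
    have h6 : N%:R * m <= N%:R * (e / (48 * Y ^+ 2)) by apply: ler_wpM2l.
    rewrite -mulrA.
    move: h h2 h3 h6.
    move: (N%:R / J.+1%:R) ((J.+1 * Bf J)%:R) (N%:R * m) (N%:R * (e / (48 * Y ^+ 2))).
    move=> a1 a2 a3 a4; lra.
  have -> : N%:R * (e / 3) = 8 * Y ^+ 2 * (2 * N%:R * (e / (48 * Y ^+ 2))).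
    by field; rewrite gt_eqF // exprn_gt0.
  apply: ler_wpM2l => //; apply: mulr_ge0 => //; apply: exprn_ge0; exact: ltW.
pose N2 := (Num.truncn (3 * n0%:R * G / e)).+1.
exists (maxn n0 N2) => N hN.
have hn0N : (n0 <= N)%N by apply: leq_trans hN; exact: leq_maxl.
have hN2 : (N2 <= N)%N by apply: leq_trans hN; exact: leq_maxr.
have Npos : (0 : R) < N%:R by rewrite ltr0n; apply: leq_trans hN2.
have hq : 3 * n0%:R * G / e < N%:R.
  apply: lt_le_trans (truncnS_gt _) _; rewrite ler_nat; exact: hN2.
have hq2 : 3 * n0%:R * G < N%:R * e by rewrite -ltr_pdivrMr.
rewrite /avg_diff -mulrBr (sum_ord_nat _ _ (fun n => (y n - prediction (@strat R X kf) x y n)^+2)) (sum_ord_nat _ _ (fun n => (y n - F (x n))^+2)).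
under eq_bigr => n _ do rewrite strat_pred -/key.
have hR := regret_bound R Y y yb key c (fun n => F (x n)) N.
have h1 := hinv N hn0N.
have h2 := hsumD N.
rewrite mulrC ler_pdivrMr //.
have -> : e * N%:R = 3 * (N%:R * (e / 3)) by field.
have e3 : N%:R * e = 3 * (N%:R * (e / 3)) by field.
rewrite e3 in hq2.
move: hR h1 h2 hq2.
move: (N%:R * (e / 3)) => t1 hR h1 h2 hq2.
lra.
Qed.
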